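(* Let $k\ge1$ and $A\in\mathbb{C}^{k\times k}$ with $\|A-\mathbbm{1}_k\|<1/k$. For $\mathbf{z}=(z_1,\ldots,z_k)^T\in\mathbb{C}^k$ put $\mathbf{w}=(w_1,\ldots,w_k)^T=A\mathbf{z}$. Then $w_1\cdots w_k\neq0$ for all $\mathbf{z}\in(\partial D)^k$, and \[ \frac{1}{\det(A)}=\frac{1}{(2\pi i)^k}\oint_{\partial D}\cdots\oint_{\partial D}\frac{1}{w_1\cdots w_k}\,dz_1\cdots dz_k . \]
   Context: $\|\cdot\|$ is the Frobenius norm, $\mathbbm{1}_k$ the identity matrix, $\partial D=\{z\in\mathbb{C}:|z|=1\}$ is the unit circle traversed once counterclockwise, and the integral is the iterated contour integral in each variable $z_j$ over $\partial D$ (i.e. over the torus $(\partial D)^k$). *)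

(* Defs.v *)
From Stdlib Require Import Reals Lra Arith.
Open Scope R_scope.

Record Cx : Type := mkC { Re : R ; Im : R }.

Definition C0 : Cx := mkC 0 0.
Definition C1 : Cx := mkC 1 0.
Definition Ci : Cx := mkC 0 1.
Definition Cadd (a b : Cx) : Cx := mkC (Re a + Re b) (Im a + Im b).
Definition Copp (a : Cx) : Cx := mkC (- Re a) (- Im a).
Definition Csub (a b : Cx) : Cx := Cadd a (Copp b).
Definition Cmul (a b : Cx) : Cx :=
  mkC (Re a * Re b - Im a * Im b) (Re a * Im b + Im a * Re b).
Definition Cnorm2 (a : Cx) : R := Re a * Re a + Im a * Im a.
Definition Cnorm (a : Cx) : R := sqrt (Cnorm2 a).
(* multiplicative inverse (junk value C0 at 0) *)
Definition Cinv (a : Cx) : Cx := mkC (Re a / Cnorm2 a) (- Im a / Cnorm2 a).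
Definition Cdiv (a b : Cx) : Cx := Cmul a (Cinv b).
Definition RtoC (x : R) : Cx := mkC x 0.
Definition Cexpi (t : R) : Cx := mkC (cos t) (sin t).

Fixpoint Cpow (a : Cx) (n : nat) : Cx :=
  match n with O => C1 | S m => Cmul a (Cpow a m) end.

Fixpoint Csum (n : nat) (f : nat -> Cx) : Cx :=
  match n with O => C0 | S m => Cadd (Csum m f) (f m) end.
Fixpoint Cprod (n : nat) (f : nat -> Cx) : Cx :=
  match n with O => C1 | S m => Cmul (Cprod m f) (f m) end.
Fixpoint Rsum (n : nat) (f : nat -> R) : R :=
  match n with O => 0 | S m => Rsum m f + f m end.

(* k x k complex matrices are functions nat -> nat -> Cx; only the entries
   with indices < k matter. *)
Definition mat := nat -> nat -> Cx.

Definition delta (i j : nat) : Cx := if Nat.eqb i j then C1 else C0.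

Definition frob (k : nat) (M : mat) : R :=
  sqrt (Rsum k (fun i => Rsum k (fun j => Cnorm2 (M i j)))).

Definition sub_id (A : mat) : mat := fun i j => Csub (A i j) (delta i j).

Definition minor0 (A : mat) (j : nat) : mat :=
  fun r c => A (S r) (if Nat.ltb c j then c else S c).

Fixpoint det (n : nat) (A : mat) : Cx :=
  match n with
  | O => C1
  | S m => Csum (S m) (fun j =>
             Cmul (Cmul (Cpow (Copp C1) j) (A 0%nat j)) (det m (minor0 A j)))
  end.

Definition mulv (k : nat) (A : mat) (z : nat -> Cx) (i : nat) : Cx :=
  Csum k (fun l => Cmul (A i l) (z l)).

Definition CInt (f : R -> Cx) (a b : R) (v : Cx) : Prop :=
  (exists pr : Riemann_integrable (fun t => Re (f t)) a b, RiemannInt pr = Re v) /\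
  (exists pr : Riemann_integrable (fun t => Im (f t)) a b, RiemannInt pr = Im v).

(* Iterated integral over [0,2pi]^n of F : (nat -> R) -> Cx, in the variables
   t_0, ..., t_{n-1}; t_{n-1} is the outermost variable and t_0 the innermost. *)
Fixpoint IterInt (n : nat) (F : (nat -> R) -> Cx) (v : Cx) : Prop :=
  match n with
  | O => v = F (fun _ => 0)
  | S m => exists g : R -> Cx,
      CInt g 0 (2 * PI) v /\
      forall s, 0 <= s <= 2 * PI ->
        IterInt m (fun t => F (fun j => if Nat.eqb j m then s else t j)) (g s)
  end.

(* Iterated contour integral over the torus (partial D)^k of f(z_0,...,z_{k-1})
   dz_0 ... dz_{k-1}, with each z_j = e^{i t_j}, dz_j = i e^{i t_j} dt_j,
   t_j in [0, 2 pi] (unit circle traversed once counterclockwise). *)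
Definition TorusInt (k : nat) (f : (nat -> Cx) -> Cx) (v : Cx) : Prop :=
  IterInt k (fun t => Cmul (f (fun j => Cexpi (t j)))
                           (Cprod k (fun j => Cmul Ci (Cexpi (t j))))) v.

(* Main.v *)
Require Import Defs.
From Stdlib Require Import Reals.
Open Scope R_scope.

From Stdlib Require Import Lra Field Lia FunctionalExtensionality.
From Coquelicot Require Import Coquelicot.
From mathcomp Require Rstruct.
Import Defs.
Open Scope R_scope.


Lemma Cx_ext (a b : Cx) : Re a = Re b -> Im a = Im b -> a = b.
Proof. destruct a, b; simpl; intros; subst; reflexivity. Qed.

Lemma Cnorm2_eq0 (a : Cx) : Cnorm2 a = 0 -> a = C0.
Proof. unfold Cnorm2; intro H; apply Cx_ext; simpl; nra. Qed.

Lemma Cnorm2_nz (a : Cx) : a <> C0 -> Cnorm2 a <> 0.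
Proof. intros H H0; apply H, Cnorm2_eq0, H0. Qed.

Lemma CRth : ring_theory C0 C1 Cadd Cmul Csub Copp (@eq Cx).
Proof.
  constructor; intros; apply Cx_ext; simpl; ring.
Qed.

Lemma CFth : field_theory C0 C1 Cadd Cmul Csub Copp Cdiv Cinv (@eq Cx).
Proof.
  constructor.
  - exact CRth.
  - intro H; assert (H1 := f_equal Re H); simpl in H1; lra.
  - reflexivity.
  - intros p Hp. assert (Hn := Cnorm2_nz p Hp). unfold Cnorm2 in Hn.
    apply Cx_ext; simpl; unfold Cnorm2; field; exact Hn.
Qed.

Add Field Cfield : CFth.

Lemma Cnorm2_ge0 a : 0 <= Cnorm2 a.
Proof. unfold Cnorm2; nra. Qed.

Lemma Cnorm_ge0 a : 0 <= Cnorm a.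
Proof. apply sqrt_pos. Qed.

Lemma Cnorm_sq a : Cnorm a * Cnorm a = Cnorm2 a.
Proof. apply sqrt_sqrt, Cnorm2_ge0. Qed.

Lemma Cnorm_mul a b : Cnorm (Cmul a b) = Cnorm a * Cnorm b.
Proof.
  unfold Cnorm; rewrite <- sqrt_mult by apply Cnorm2_ge0.
  f_equal; unfold Cnorm2; simpl; ring.
Qed.

Lemma sq_le x y : 0 <= y -> x * x <= y * y -> x <= y.
Proof. intros Hy H. destruct (Rle_dec x y) as [h|h]; auto. exfalso. nra. Qed.

Lemma Cnorm_add a b : Cnorm (Cadd a b) <= Cnorm a + Cnorm b.
Proof.
  assert (Ha := Cnorm_sq a); assert (Hb := Cnorm_sq b); assert (Hab := Cnorm_sq (Cadd a b)).
  assert (Pa := Cnorm_ge0 a); assert (Pb := Cnorm_ge0 b); assert (Pab := Cnorm_ge0 (Cadd a b)).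
  assert (D : (Re a * Re b + Im a * Im b) <= Cnorm a * Cnorm b).
  { assert (CS : (Re a * Re b + Im a * Im b) * (Re a * Re b + Im a * Im b) <=
                 (Cnorm a * Cnorm b) * (Cnorm a * Cnorm b)).
    { replace ((Cnorm a * Cnorm b) * (Cnorm a * Cnorm b)) with
        ((Cnorm a * Cnorm a) * (Cnorm b * Cnorm b)) by ring.
      rewrite Ha, Hb; unfold Cnorm2.
      assert (Q := Rle_0_sqr (Re a * Im b - Im a * Re b)); unfold Rsqr in Q. nra. }
    apply sq_le; auto. apply Rmult_le_pos; auto. }
  assert (Sq : Cnorm (Cadd a b) * Cnorm (Cadd a b) <= (Cnorm a + Cnorm b) * (Cnorm a + Cnorm b)).
  { rewrite Hab. replace ((Cnorm a + Cnorm b) * (Cnorm a + Cnorm b)) with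
      (Cnorm a * Cnorm a + Cnorm b * Cnorm b + 2 * (Cnorm a * Cnorm b)) by ring.
    rewrite Ha, Hb. unfold Cnorm2; simpl. nra. }
  apply sq_le; auto. lra.
Qed.

Lemma Cnorm_opp a : Cnorm (Copp a) = Cnorm a.
Proof. unfold Cnorm, Cnorm2; simpl; f_equal; ring. Qed.

Lemma Cnorm_sub_ge a b : Cnorm a - Cnorm b <= Cnorm (Cadd a b).
Proof.
  assert (H := Cnorm_add (Cadd a b) (Copp b)).
  replace (Cadd (Cadd a b) (Copp b)) with a in H by (apply Cx_ext; simpl; ring).
  rewrite Cnorm_opp in H; lra.
Qed.

Lemma Cnorm_C0 : Cnorm C0 = 0.
Proof. unfold Cnorm, Cnorm2; simpl; rewrite Rmult_0_l, Rplus_0_l; apply sqrt_0. Qed.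

Lemma Cnorm_eq0 a : Cnorm a = 0 -> a = C0.
Proof. intro H; apply Cnorm2_eq0; rewrite <- Cnorm_sq, H; ring. Qed.

Lemma Cnorm_pos a : a <> C0 -> 0 < Cnorm a.
Proof. intro H; destruct (Cnorm_ge0 a) as [H1|H1]; auto. exfalso; apply H, Cnorm_eq0; auto. Qed.

Lemma Cnorm_nz a : 0 < Cnorm a -> a <> C0.
Proof. intros H E; subst; rewrite Cnorm_C0 in H; lra. Qed.

Lemma Cnorm_inv a : a <> C0 -> Cnorm (Cinv a) = / Cnorm a.
Proof.
  intro H. assert (P := Cnorm_pos a H).
  assert (E : Cnorm (Cinv a) * Cnorm a = 1).
  { rewrite <- Cnorm_mul. replace (Cmul (Cinv a) a) with C1 by (field; auto).
    unfold Cnorm, Cnorm2; simpl. replace (1*1+0*0) with 1 by ring. apply sqrt_1. }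
  apply (Rmult_eq_reg_r (Cnorm a)); [|lra]. rewrite E; field; lra.
Qed.

Lemma Cnorm_expi t : Cnorm (Cexpi t) = 1.
Proof.
  unfold Cnorm, Cnorm2; simpl.
  replace (cos t * cos t + sin t * sin t) with 1 by (rewrite <- (sin2_cos2 t); unfold Rsqr; ring).
  apply sqrt_1.
Qed.

Lemma Re_le a : Rabs (Re a) <= Cnorm a.
Proof.
  assert (H := Cnorm_sq a); assert (P := Cnorm_ge0 a); unfold Cnorm2 in H.
  apply Rabs_le; split; nra.
Qed.

Lemma Im_le a : Rabs (Im a) <= Cnorm a.
Proof.
  assert (H := Cnorm_sq a); assert (P := Cnorm_ge0 a); unfold Cnorm2 in H.
  apply Rabs_le; split; nra.
Qed.

Lemma Cnorm_sum n f : Cnorm (Csum n f) <= Rsum n (fun i => Cnorm (f i)).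
Proof.
  induction n; simpl.
  - rewrite Cnorm_C0; lra.
  - eapply Rle_trans; [apply Cnorm_add|]. lra.
Qed.

Lemma Cnorm_pow a n : Cnorm (Cpow a n) = Cnorm a ^ n.
Proof.
  induction n; simpl.
  - unfold Cnorm, Cnorm2; simpl. replace (1*1+0*0) with 1 by ring. apply sqrt_1.
  - rewrite Cnorm_mul, IHn; ring.
Qed.

Lemma Cnorm_RtoC x : 0 <= x -> Cnorm (RtoC x) = x.
Proof. intro H; unfold Cnorm, Cnorm2; simpl. replace (x*x+0*0) with (x*x) by ring. apply sqrt_square; auto. Qed.


Definition schur (A : mat) : mat := fun i l =>
  Csub (A (S i) (S l)) (Cmul (A (S i) O) (Cdiv (A O (S l)) (A O O))).

Module DetM.
From HB Require Import structures.
From mathcomp Require Import all_boot all_algebra.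
From mathcomp Require Import Rstruct.
Import GRing.Theory.

Definition c2p (x : Cx) : R * R := (Re x, Im x).
Definition p2c (p : R * R) : Cx := mkC p.1 p.2.
Lemma c2pK : cancel c2p p2c. Proof. by case. Qed.
HB.instance Definition _ := Choice.copy Cx (can_type c2pK).

Lemma CaddA : forall a b c : Cx, Cadd a (Cadd b c) = Cadd (Cadd a b) c.
Proof. move=> a b c; apply: Cx_ext => /=; lra. Qed.
Lemma CaddC : forall a b : Cx, Cadd a b = Cadd b a.
Proof. move=> a b; apply: Cx_ext => /=; lra. Qed.
Lemma Cadd0 : forall a : Cx, Cadd C0 a = a.
Proof. move=> a; apply: Cx_ext => /=; lra. Qed.
Lemma CaddN : forall a : Cx, Cadd (Copp a) a = C0.
Proof. move=> a; apply: Cx_ext => /=; lra. Qed.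
HB.instance Definition _ := GRing.isZmodule.Build Cx CaddA CaddC Cadd0 CaddN.

Lemma CmulA : forall a b c : Cx, Cmul a (Cmul b c) = Cmul (Cmul a b) c.
Proof. move=> a b c; apply: Cx_ext => /=; ring. Qed.
Lemma CmulC : forall a b : Cx, Cmul a b = Cmul b a.
Proof. move=> a b; apply: Cx_ext => /=; ring. Qed.
Lemma Cmul1 : forall a : Cx, Cmul Defs.C1 a = a.
Proof. move=> a; apply: Cx_ext => /=; ring. Qed.
Lemma CmulDl : forall a b c : Cx, Cmul (Cadd a b) c = Cadd (Cmul a c) (Cmul b c).
Proof. move=> a b c; apply: Cx_ext => /=; ring. Qed.
Lemma C1_neq0 : Defs.C1 != C0.
Proof. apply/eqP => H; have := f_equal Re H => /=; lra. Qed.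
HB.instance Definition _ := GRing.Zmodule_isComNzRing.Build Cx CmulA CmulC Cmul1 CmulDl C1_neq0.

Lemma CmulV (x : Cx) : x != 0%R -> Cmul (Cinv x) x = Defs.C1.
Proof.
move/eqP=> H.
have Hn : Cnorm2 x <> 0 by move=> H0; apply: H; exact: Cnorm2_eq0.
apply: Cx_ext; rewrite /= /Cnorm2 in Hn *; field; exact Hn.
Qed.
Lemma Cinv0 : Cinv 0%R = 0%R.
Proof. apply: Cx_ext => /=; rewrite /Rdiv; ring. Qed.
HB.instance Definition _ := GRing.ComNzRing_isField.Build Cx CmulV Cinv0.


Local Open Scope ring_scope.

Definition mx n (A : mat) : 'M[Cx]_n := \matrix_(i < n, j < n) A i j.

Lemma Csum_big n (f : nat -> Cx) : Csum n f = \sum_(j < n) f j.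
Proof. elim: n => [|n IH]; first by rewrite big_ord0.
by rewrite big_ord_recr /= IH. Qed.

Lemma Cpow_exp (a : Cx) j : Cpow a j = a ^+ j.
Proof. elim: j => [|j IH] //=; by rewrite exprS IH. Qed.

Lemma Cmul_mul (a b : Cx) : Cmul a b = a * b. Proof. by []. Qed.

Lemma ltbE a b : Nat.ltb a b = (a < b)%N.
Proof. case: (ltnP a b) => H; [exact/Nat.ltb_lt/ltP | exact/Nat.ltb_ge/leP]. Qed.

Lemma detE n A : det n A = \det (mx n A).
Proof.
elim: n A => [|n IH] A.
  by rewrite det_mx00.
transitivity (Csum n.+1 (fun j => Cmul (Cmul (Cpow (Copp Defs.C1) j) (A 0%N j)) (det n (minor0 A j)))); first by [].
rewrite Csum_big (expand_det_row _ ord0); apply: eq_bigr => j _.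
rewrite /cofactor.
have -> : row' ord0 (col' j (mx n.+1 A)) = mx n (minor0 A j).
  apply/matrixP => r c; rewrite !mxE /=.
  rewrite /minor0 /bump /=; congr (A _ _).
  rewrite ltbE; by case: (ltnP c j).
rewrite IH !mxE Cpow_exp add0n.
have -> : Copp Defs.C1 = -1 by [].
by rewrite !Cmul_mul -mulrA mulrCA.
Qed.

Lemma det_schur n (A : mat) : A O O <> C0 -> det n.+1 A = Cmul (A O O) (det n (schur A)).
Proof.
move=> H0; rewrite !detE Cmul_mul.
set M := mx n.+1 A.
pose N : 'M[Cx]_(n.+1) := \matrix_(i, j) (if (i == ord0) && (j != ord0) then - (M ord0 j / M ord0 ord0) else 0).
have dE : \det (1%:M + N) = 1.
  rewrite -det_tr det_trig; last first.
    apply/is_trig_mxP => i j ij; rewrite !mxE.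
    have jn0 : (j != ord0) by rewrite -(inj_eq val_inj) /= -lt0n (leq_ltn_trans _ ij).
    have ji : (j != i) by rewrite neq_ltn ij orbT.
    by rewrite (negbTE jn0) (negbTE ji) /= addr0.
  apply: big1 => i _; rewrite !mxE eqxx.
  by case: (i == ord0); rewrite /= ?andbF addr0.
have entry : forall i j, (M *m (1%:M + N)) i j = M i j + M i ord0 * (if j != ord0 then - (M ord0 j / M ord0 ord0) else 0).
  move=> i j; rewrite mulmxDr mulmx1 !mxE; congr (_ + _).
  rewrite (bigD1 ord0) //= big1 ?addr0; last first.
    by move=> l ln0; rewrite !mxE (negbTE ln0) /= mulr0.
  by rewrite !mxE eqxx /=.
have M00 : M ord0 ord0 != 0 by rewrite mxE; apply/eqP.
rewrite -(mulr1 (\det M)) -dE -det_mulmx (expand_det_row _ ord0) (bigD1 ord0) //=.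
rewrite big1 ?addr0; last first.
  move=> j jn0; rewrite entry jn0 mulrN [M ord0 ord0 * _]mulrCA divff // mulr1 subrr.
  by rewrite mul0r.
rewrite entry eqxx /= mulr0 addr0 /cofactor /= expr0 mul1r {1}/M mxE.
congr (_ * \det _); apply/matrixP => r c; rewrite [in LHS]mxE [in LHS]mxE entry /= /schur.
rewrite /M !mxE /= mulrN; reflexivity.
Qed.
End DetM.


Lemma Csum_shift n f : Csum (S n) f = Cadd (f O) (Csum n (fun i => f (S i))).
Proof.
  induction n.
  - simpl. apply Cx_ext; simpl; ring.
  - change (Csum (S (S n)) f) with (Cadd (Csum (S n) f) (f (S n))).
    rewrite IHn. simpl. ring.
Qed.

Lemma Cprod_shift n f : Cprod (S n) f = Cmul (f O) (Cprod n (fun i => f (S i))).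
Proof.
  induction n.
  - simpl. ring.
  - change (Cprod (S (S n)) f) with (Cmul (Cprod (S n) f) (f (S n))).
    rewrite IHn. simpl. ring.
Qed.

Lemma Rsum_shift n f : Rsum (S n) f = f O + Rsum n (fun i => f (S i)).
Proof.
  induction n.
  - simpl. ring.
  - change (Rsum (S (S n)) f) with (Rsum (S n) f + f (S n)).
    rewrite IHn. simpl. ring.
Qed.

Lemma Csum_ext n f g : (forall i, (i < n)%nat -> f i = g i) -> Csum n f = Csum n g.
Proof. induction n; intro H; simpl; auto. rewrite IHn, H; auto; intros; apply H; lia. Qed.

Lemma Cprod_ext n f g : (forall i, (i < n)%nat -> f i = g i) -> Cprod n f = Cprod n g.
Proof. induction n; intro H; simpl; auto. rewrite IHn, H; auto; intros; apply H; lia. Qed.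

Lemma Rsum_ext n f g : (forall i, (i < n)%nat -> f i = g i) -> Rsum n f = Rsum n g.
Proof. induction n; intro H; simpl; auto. rewrite IHn, H; auto; intros; apply H; lia. Qed.

Lemma Rsum_le n f g : (forall i, (i < n)%nat -> f i <= g i) -> Rsum n f <= Rsum n g.
Proof. induction n; intro H; simpl; [lra|]. assert (H1 := H n (Nat.lt_succ_diag_r n)).
  assert (Rsum n f <= Rsum n g) by (apply IHn; intros; apply H; lia). lra. Qed.

Lemma Rsum_ge0 n f : (forall i, (i < n)%nat -> 0 <= f i) -> 0 <= Rsum n f.
Proof. intro H. replace 0 with (Rsum n (fun _ => 0)). apply Rsum_le; auto.
  clear H; induction n; simpl; auto; rewrite IHn; ring. Qed.

Lemma Rsum_scal n c f : Rsum n (fun i => c * f i) = c * Rsum n f.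
Proof. induction n; simpl; [ring|]. rewrite IHn; ring. Qed.

Lemma Rsum_add n f g : Rsum n (fun i => f i + g i) = Rsum n f + Rsum n g.
Proof. induction n; simpl; [ring|]. rewrite IHn; ring. Qed.

Lemma Csum_add n f g : Csum n (fun i => Cadd (f i) (g i)) = Cadd (Csum n f) (Csum n g).
Proof. induction n; simpl; [apply Cx_ext; simpl; ring|]. rewrite IHn; ring. Qed.

Lemma Csum_scal n c f : Csum n (fun i => Cmul c (f i)) = Cmul c (Csum n f).
Proof. induction n; simpl; [apply Cx_ext; simpl; ring|]. rewrite IHn; ring. Qed.

Lemma Csum_opp n f : Csum n (fun i => Copp (f i)) = Copp (Csum n f).
Proof. induction n; simpl; [apply Cx_ext; simpl; ring|]. rewrite IHn; ring. Qed.

Lemma Rsum_split n f i : (i < n)%nat ->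
  Rsum n f = f i + Rsum n (fun l => if Nat.eqb l i then 0 else f l).
Proof.
  induction n; intro H; [lia|]. simpl.
  destruct (Nat.eq_dec i n) as [->|Hne].
  - rewrite Nat.eqb_refl.
    rewrite (Rsum_ext n (fun l => if Nat.eqb l n then 0 else f l) f).
    + ring.
    + intros l Hl. destruct (Nat.eqb_spec l n); [lia|auto].
  - rewrite IHn by lia. destruct (Nat.eqb_spec n i); [lia|]. ring.
Qed.

Lemma Csum_split n f i : (i < n)%nat ->
  Csum n f = Cadd (f i) (Csum n (fun l => if Nat.eqb l i then C0 else f l)).
Proof.
  induction n; intro H; [lia|]. simpl.
  destruct (Nat.eq_dec i n) as [->|Hne].
  - rewrite Nat.eqb_refl.
    rewrite (Csum_ext n (fun l => if Nat.eqb l n then C0 else f l) f).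
    + apply Cx_ext; simpl; ring.
    + intros l Hl. destruct (Nat.eqb_spec l n); [lia|auto].
  - rewrite IHn by lia. destruct (Nat.eqb_spec n i); [lia|]. ring.
Qed.

Lemma Cprod_nz n f : (forall i, (i < n)%nat -> f i <> C0) -> Cprod n f <> C0.
Proof.
  induction n; intro H; simpl.
  - intro E; assert (E1 := f_equal Re E); simpl in E1; lra.
  - intro E. assert (P1 := Cnorm_pos _ (IHn (fun i Hi => H i (Nat.lt_lt_succ_r _ _ Hi)))).
    assert (P2 := Cnorm_pos _ (H n (Nat.lt_succ_diag_r n))).
    assert (E1 := f_equal Cnorm E). rewrite Cnorm_mul, Cnorm_C0 in E1. nra.
Qed.

Lemma Cinv_mul a b : Cinv (Cmul a b) = Cmul (Cinv a) (Cinv b).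
Proof.
  destruct (Req_dec (Cnorm2 a) 0) as [Ha|Ha].
  - apply Cnorm2_eq0 in Ha; subst. apply Cx_ext; simpl; unfold Cnorm2, Rdiv; simpl; ring.
  - destruct (Req_dec (Cnorm2 b) 0) as [Hb|Hb].
    + apply Cnorm2_eq0 in Hb; subst. apply Cx_ext; simpl; unfold Cnorm2, Rdiv; simpl; ring.
    + field. split; intro E; subst; unfold Cnorm2 in *; simpl in *; lra.
Qed.

Lemma Cmul_nz a b : a <> C0 -> b <> C0 -> Cmul a b <> C0.
Proof. intros Ha Hb E. assert (P1 := Cnorm_pos _ Ha). assert (P2 := Cnorm_pos _ Hb).
  assert (E1 := f_equal Cnorm E). rewrite Cnorm_mul, Cnorm_C0 in E1. nra. Qed.

Lemma Cpow_nz a n : a <> C0 -> Cpow a n <> C0.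
Proof. intro H; induction n; simpl. - intro E; assert (E1 := f_equal Re E); simpl in E1; lra.
  - apply Cmul_nz; auto. Qed.


Definition CI (f : R -> Cx) (v : Cx) : Prop :=
  is_RInt (fun s => Re (f s)) 0 (2 * PI) (Re v) /\ is_RInt (fun s => Im (f s)) 0 (2 * PI) (Im v).

Lemma RI_Riemann (f : R -> R) v : is_RInt f 0 (2*PI) v ->
  exists pr : Riemann_integrable f 0 (2*PI), RiemannInt pr = v.
Proof.
  intro H. assert (E : ex_RInt f 0 (2*PI)) by (exists v; auto).
  exists (ex_RInt_Reals_0 _ _ _ E). rewrite <- RInt_Reals. apply is_RInt_unique; auto.
Qed.

Lemma CI_CInt f v : CI f v -> CInt f 0 (2*PI) v.
Proof. intros [H1 H2]; split; apply RI_Riemann; auto. Qed.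

Lemma Riemann_RI (f : R -> R) v : (exists pr : Riemann_integrable f 0 (2*PI), RiemannInt pr = v) ->
  is_RInt f 0 (2*PI) v.
Proof.
  intros [pr H]. rewrite <- H, <- (RInt_Reals f 0 (2*PI) pr). exact (@RInt_correct R_CompleteNormedModule f 0 (2*PI) (ex_RInt_Reals_1 _ _ _ pr)).
Qed.

Lemma CInt_CI f v : CInt f 0 (2*PI) v -> CI f v.
Proof. intros [H1 H2]; split; apply Riemann_RI; auto. Qed.

Lemma CI_ext f g v : (forall s, f s = g s) -> CI f v -> CI g v.
Proof.
  intros E [H1 H2]; split; (eapply is_RInt_ext; [|eassumption]); intros; simpl; rewrite E; auto.
Qed.

Lemma CI_ext_eq f v w : v = w -> CI f v -> CI f w.
Proof. intros ->; auto. Qed.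

Lemma CI_add f g v w : CI f v -> CI g w -> CI (fun s => Cadd (f s) (g s)) (Cadd v w).
Proof.
  intros [H1 H2] [H3 H4]; split; simpl.
  - apply (is_RInt_plus _ _ _ _ _ _ H1 H3).
  - apply (is_RInt_plus _ _ _ _ _ _ H2 H4).
Qed.

Lemma CI_scal c f v : CI f v -> CI (fun s => Cmul c (f s)) (Cmul c v).
Proof.
  intros [H1 H2]; split; simpl.
  - apply (is_RInt_minus _ _ _ _ _ _ (is_RInt_scal _ _ _ (Re c) _ H1) (is_RInt_scal _ _ _ (Im c) _ H2)).
  - apply (is_RInt_plus _ _ _ _ _ _ (is_RInt_scal _ _ _ (Re c) _ H2) (is_RInt_scal _ _ _ (Im c) _ H1)).
Qed.

Lemma CI_sub f g v w : CI f v -> CI g w -> CI (fun s => Csub (f s) (g s)) (Csub v w).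
Proof.
  intros H1 H2. unfold Csub. apply CI_add; auto.
  assert (H := CI_scal (Copp C1) _ _ H2).
  eapply CI_ext_eq; [|eapply CI_ext; [|exact H]]; [|intros]; simpl; apply Cx_ext; simpl; ring.
Qed.

Lemma CI_const c : CI (fun _ => c) (Cmul (RtoC (2*PI)) c).
Proof.
  split; simpl.
  - replace (2*PI*Re c - 0 * Im c) with (scal (2*PI - 0) (Re c)). apply (@is_RInt_const R_NormedModule).
    unfold scal; simpl; unfold mult; simpl; ring.
  - replace (2*PI*Im c + 0 * Re c) with (scal (2*PI - 0) (Im c)). apply (@is_RInt_const R_NormedModule).
    unfold scal; simpl; unfold mult; simpl; ring.
Qed.

Definition Ccont (f : R -> Cx) : Prop :=
  forall s, continuity_pt (fun s => Re (f s)) s /\ continuity_pt (fun s => Im (f s)) s.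

Lemma Ccont_const c : Ccont (fun _ => c).
Proof. intro s; split; apply continuity_pt_const; intros x y; auto. Qed.

Lemma Ccont_add f g : Ccont f -> Ccont g -> Ccont (fun s => Cadd (f s) (g s)).
Proof. intros Hf Hg s; destruct (Hf s), (Hg s); split; simpl; apply continuity_pt_plus; auto. Qed.

Lemma Ccont_mul f g : Ccont f -> Ccont g -> Ccont (fun s => Cmul (f s) (g s)).
Proof. intros Hf Hg s; destruct (Hf s), (Hg s); split; simpl.
  - apply continuity_pt_minus; apply continuity_pt_mult; auto.
  - apply continuity_pt_plus; apply continuity_pt_mult; auto. Qed.

Lemma Ccont_inv f : Ccont f -> (forall s, f s <> C0) -> Ccont (fun s => Cinv (f s)).
Proof.
  intros Hf Hn s; destruct (Hf s) as [H1 H2].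
  assert (N : continuity_pt (fun s => Cnorm2 (f s)) s).
  { unfold Cnorm2; apply continuity_pt_plus; apply continuity_pt_mult; auto. }
  assert (Nz := Cnorm2_nz _ (Hn s)).
  split; simpl; apply continuity_pt_div; auto.
  apply continuity_pt_opp; auto.
Qed.

Lemma Ccont_expi m : Ccont (fun s => Cexpi (m * s)).
Proof.
  intro s; split; simpl.
  - apply (continuity_pt_comp (fun s => m * s) cos).
    + apply continuity_pt_mult; [apply continuity_pt_const; intros x y; auto|apply continuity_pt_id].
    + apply continuity_cos.
  - apply (continuity_pt_comp (fun s => m * s) sin).
    + apply continuity_pt_mult; [apply continuity_pt_const; intros x y; auto|apply continuity_pt_id].
    + apply continuity_sin.
Qed.

Lemma Ccont_ext f g : (forall s, f s = g s) -> Ccont f -> Ccont g.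
Proof.
  intros E H s; destruct (H s) as [H1 H2]; split.
  - eapply continuity_pt_ext; [|exact H1]; intros; simpl; rewrite E; auto.
  - eapply continuity_pt_ext; [|exact H2]; intros; simpl; rewrite E; auto.
Qed.

Lemma Ccont_prod n (f : nat -> R -> Cx) : (forall i, (i < n)%nat -> Ccont (f i)) ->
  Ccont (fun s => Cprod n (fun i => f i s)).
Proof.
  induction n; intro H; simpl.
  - apply Ccont_const.
  - apply Ccont_mul; [apply IHn; intros; apply H; lia | apply H; lia].
Qed.

Lemma Ccont_sum n (f : nat -> R -> Cx) : (forall i, (i < n)%nat -> Ccont (f i)) ->
  Ccont (fun s => Csum n (fun i => f i s)).
Proof.
  induction n; intro H; simpl.
  - apply Ccont_const.
  - apply Ccont_add; [apply IHn; intros; apply H; lia | apply H; lia].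
Qed.

Lemma RI_approx (f : R -> R) v : (forall s, continuity_pt f s) ->
  (forall eps, 0 < eps -> exists g, is_RInt g 0 (2*PI) v /\
       forall s, 0 <= s <= 2*PI -> Rabs (f s - g s) <= eps) ->
  is_RInt f 0 (2*PI) v.
Proof.
  intros Hc Ha.
  assert (Ex : ex_RInt f 0 (2*PI)).
  { apply (@ex_RInt_continuous R_CompleteNormedModule); intros z _. apply continuity_pt_filterlim; auto. }
  assert (Hi := @RInt_correct R_CompleteNormedModule _ _ _ Ex).
  set (I := RInt f 0 (2*PI)) in *.
  assert (B : forall eps, 0 < eps -> Rabs (I - v) <= 2 * PI * eps).
  { intros eps He. destruct (Ha eps He) as [g [Hg Hb]].
    assert (Hd := is_RInt_minus _ _ _ _ _ _ Hi Hg).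
    assert (N := @norm_RInt_le_const R_NormedModule (fun y => minus (f y) (g y)) 0 (2*PI) (minus I v) eps
      (Rlt_le _ _ (Rmult_lt_0_compat 2 PI ltac:(lra) PI_RGT_0))
      (fun x Hx => (Hb x Hx : norm (minus (f x) (g x)) <= eps)) Hd).
    change (Rabs (I - v) <= (2 * PI - 0) * eps) in N. lra. }
  replace v with I; auto.
  destruct (Req_dec (I - v) 0) as [E|E]; [lra|].
  exfalso. assert (P := Rabs_pos_lt _ E). assert (Ppi := PI_RGT_0).
  assert (B1 := B (Rabs (I - v) / (4 * PI)) ltac:(apply Rdiv_lt_0_compat; lra)).
  replace (2 * PI * (Rabs (I - v) / (4 * PI))) with (Rabs (I - v) / 2) in B1 by (field; lra).
  lra.
Qed.

Lemma CI_approx f V : Ccont f ->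
  (forall eps, 0 < eps -> exists g, CI g V /\
       forall s, 0 <= s <= 2*PI -> Cnorm (Csub (f s) (g s)) <= eps) ->
  CI f V.
Proof.
  intros Hc Ha; split; apply RI_approx.
  - intro s; apply (Hc s).
  - intros eps He; destruct (Ha eps He) as [g [[H1 H2] Hb]]; exists (fun s => Re (g s)); split; auto.
    intros s Hs; eapply Rle_trans; [|apply (Hb s Hs)]. apply (Re_le (Csub (f s) (g s))).
  - intro s; apply (Hc s).
  - intros eps He; destruct (Ha eps He) as [g [[H1 H2] Hb]]; exists (fun s => Im (g s)); split; auto.
    intros s Hs; eapply Rle_trans; [|apply (Hb s Hs)]. apply (Im_le (Csub (f s) (g s))).
Qed.


Lemma Cexpi_add a b : Cmul (Cexpi a) (Cexpi b) = Cexpi (a + b).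
Proof. apply Cx_ext; simpl; [rewrite cos_plus | rewrite sin_plus]; ring. Qed.

Lemma Cexpi_0 : Cexpi 0 = C1.
Proof. apply Cx_ext; simpl; [apply cos_0 | apply sin_0]. Qed.

Lemma sin_2nPI n : sin (2 * INR n * PI) = 0.
Proof. replace (2 * INR n * PI) with (0 + 2 * INR n * PI) by ring. rewrite sin_period; apply sin_0. Qed.
Lemma cos_2nPI n : cos (2 * INR n * PI) = 1.
Proof. replace (2 * INR n * PI) with (0 + 2 * INR n * PI) by ring. rewrite cos_period; apply cos_0. Qed.

Lemma RI_cos_lin m : m <> 0 -> sin (m * (2*PI)) = 0 ->
  is_RInt (fun s => cos (m * s)) 0 (2*PI) 0.
Proof.
  intros Hm Hs.
  assert (H := @is_RInt_derive R_CompleteNormedModule (fun s => sin (m*s)/m) (fun s => cos (m*s)) 0 (2*PI)).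
  assert (E : minus (sin (m*(2*PI))/m) (sin (m*0)/m) = 0).
  { rewrite Hs, Rmult_0_r, sin_0. unfold minus, plus, opp; simpl. field; auto. }
  rewrite <- E at 2. apply H; intros x _.
    - auto_derive; auto. field; auto.
    - apply continuity_pt_filterlim.
      apply (continuity_pt_comp (fun s => m * s) cos).
      + apply continuity_pt_mult; [apply continuity_pt_const; intros u v; auto|apply continuity_pt_id].
      + apply continuity_cos.
Qed.

Lemma RI_sin_lin m : m <> 0 -> cos (m * (2*PI)) = 1 ->
  is_RInt (fun s => sin (m * s)) 0 (2*PI) 0.
Proof.
  intros Hm Hc.
  assert (H := @is_RInt_derive R_CompleteNormedModule (fun s => - cos (m*s)/m) (fun s => sin (m*s)) 0 (2*PI)).
  assert (E : minus (- cos (m*(2*PI))/m) (- cos (m*0)/m) = 0).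
  { rewrite Hc, Rmult_0_r, cos_0. unfold minus, plus, opp; simpl. field; auto. }
  rewrite <- E at 2. apply H; intros x _.
    - auto_derive; auto. field; auto.
    - apply continuity_pt_filterlim.
      apply (continuity_pt_comp (fun s => m * s) sin).
      + apply continuity_pt_mult; [apply continuity_pt_const; intros u v; auto|apply continuity_pt_id].
      + apply continuity_sin.
Qed.

Definition sgn_ok (sg : R) := sg = 1 \/ sg = -1.

Lemma CI_expi sg n : sgn_ok sg ->
  CI (fun s => Cexpi (sg * INR n * s)) (if Nat.eqb n 0 then RtoC (2*PI) else C0).
Proof.
  intro Hsg. destruct (Nat.eqb_spec n 0) as [->|Hn].
  - eapply CI_ext_eq; [|eapply CI_ext; [|apply (CI_const C1)]].
    + apply Cx_ext; simpl; ring.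
    + intro s; simpl. rewrite Rmult_0_r, Rmult_0_l, Cexpi_0; auto.
  - assert (Hm : sg * INR n <> 0).
    { assert (0 < INR n) by (apply lt_0_INR; lia). destruct Hsg; subst; nra. }
    assert (Ang : sg * INR n * (2 * PI) = 2 * INR n * PI \/ sg * INR n * (2 * PI) = - (2 * INR n * PI)).
    { destruct Hsg; subst; [left|right]; ring. }
    split; simpl.
    + apply RI_cos_lin; auto. destruct Ang as [-> | ->]; [|rewrite sin_neg]; rewrite sin_2nPI; ring.
    + apply RI_sin_lin; auto. destruct Ang as [-> | ->]; [|rewrite cos_neg]; apply cos_2nPI.
Qed.

Inductive IsPoly : (Cx -> Cx) -> Prop :=
| IP_const c : IsPoly (fun _ => c)
| IP_X G : IsPoly G -> IsPoly (fun z => Cmul z (G z))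
| IP_add G H : IsPoly G -> IsPoly H -> IsPoly (fun z => Cadd (G z) (H z))
| IP_ext G H : (forall z, G z = H z) -> IsPoly G -> IsPoly H.

Lemma IsPoly_scal c G : IsPoly G -> IsPoly (fun z => Cmul c (G z)).
Proof.
  induction 1 as [c0|G HG IH|G H HG IH1 HH IH2|G H E HG IH].
  - apply IP_const.
  - eapply IP_ext; [|apply (IP_X _ IH)]. intro z; simpl; ring.
  - eapply IP_ext; [|apply (IP_add _ _ IH1 IH2)]. intro z; simpl; ring.
  - eapply IP_ext; [|apply IH]. intro z; simpl; rewrite E; auto.
Qed.

Lemma IsPoly_mul G H : IsPoly G -> IsPoly H -> IsPoly (fun z => Cmul (G z) (H z)).
Proof.
  intros HG HH; induction HG as [c0|G HG IH|G H' HG IH1 HH' IH2|G H' E HG IH].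
  - apply IsPoly_scal; auto.
  - eapply IP_ext; [|apply (IP_X _ IH)]. intro z; simpl; ring.
  - eapply IP_ext; [|apply (IP_add _ _ IH1 IH2)]. intro z; simpl; ring.
  - eapply IP_ext; [|apply IH]. intro z; simpl; rewrite E; auto.
Qed.

Lemma IsPoly_geo b N : IsPoly (fun z => Csum N (fun j => Cpow (Cmul b z) j)).
Proof.
  induction N; simpl.
  - apply IP_const.
  - apply IP_add; auto. clear IHN. induction N; simpl.
    + apply IP_const.
    + eapply IP_ext; [|apply (IP_X _ (IsPoly_scal b _ IHN))]. intro z; simpl; ring.
Qed.

Lemma IsPoly_int sg G : sgn_ok sg -> IsPoly G -> forall n,
  CI (fun s => Cmul (Cexpi (sg * INR n * s)) (G (Cexpi (sg * s))))
     (if Nat.eqb n 0 then Cmul (RtoC (2*PI)) (G C0) else C0).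
Proof.
  intros Hsg HG; induction HG as [c|G HG IH|G H HG IH1 HH IH2|G H E HG IH]; intro n.
  - eapply CI_ext_eq; [|eapply CI_ext; [|apply (CI_scal c _ _ (CI_expi sg n Hsg))]].
    + destruct (Nat.eqb n 0); ring.
    + intro s; simpl; ring.
  - eapply CI_ext_eq; [|eapply CI_ext; [|apply (IH (S n))]].
    + simpl. destruct (Nat.eqb n 0); ring.
    + intro s; cbv beta. rewrite S_INR.
      replace (sg * (INR n + 1) * s) with (sg * INR n * s + sg * s) by ring.
      rewrite <- Cexpi_add; ring.
  - eapply CI_ext_eq; [|eapply CI_ext; [|apply (CI_add _ _ _ _ (IH1 n) (IH2 n))]].
    + destruct (Nat.eqb n 0); ring.
    + intro s; simpl; ring.
  - eapply CI_ext_eq; [|eapply CI_ext; [|apply (IH n)]].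
    + rewrite E; auto.
    + intro s; simpl; rewrite E; auto.
Qed.


Definition UA (f : Cx -> Cx) := forall eps, 0 < eps -> exists G, IsPoly G /\ G C0 = f C0 /\
  forall z, Cnorm z = 1 -> Cnorm (Csub (f z) (G z)) <= eps.
Definition Bnd (f : Cx -> Cx) M := forall z, Cnorm z = 1 -> Cnorm (f z) <= M.

Lemma Cnorm_sub a b : Cnorm (Csub a b) <= Cnorm a + Cnorm b.
Proof. unfold Csub. eapply Rle_trans; [apply Cnorm_add|]. rewrite Cnorm_opp; lra. Qed.

Lemma UA_mul f1 f2 M1 M2 : 0 <= M1 -> 0 <= M2 -> Bnd f1 M1 -> Bnd f2 M2 -> UA f1 -> UA f2 ->
  UA (fun z => Cmul (f1 z) (f2 z)).
Proof.
  intros P1 P2 B1 B2 U1 U2 eps He.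
  set (d := Rmin 1 (eps / (M1 + M2 + 1))).
  assert (Hd : 0 < d) by (apply Rmin_glb_lt; [lra| apply Rdiv_lt_0_compat; lra]).
  assert (Hd1 : d <= 1) by apply Rmin_l.
  assert (Hd2 : d <= eps / (M1 + M2 + 1)) by apply Rmin_r.
  destruct (U1 d Hd) as [G1 [HG1 [E1 A1]]]. destruct (U2 d Hd) as [G2 [HG2 [E2 A2]]].
  exists (fun z => Cmul (G1 z) (G2 z)); repeat split.
  - apply IsPoly_mul; auto.
  - rewrite E1, E2; auto.
  - intros z Hz.
    replace (Csub (Cmul (f1 z) (f2 z)) (Cmul (G1 z) (G2 z))) with
      (Cadd (Cmul (f1 z) (Csub (f2 z) (G2 z))) (Cmul (Csub (f1 z) (G1 z)) (G2 z))) by ring.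
    assert (HG2b : Cnorm (G2 z) <= M2 + d).
    { replace (G2 z) with (Csub (f2 z) (Csub (f2 z) (G2 z))) by ring.
      eapply Rle_trans; [apply Cnorm_sub|]. assert (Hx := B2 z Hz). assert (Hy := A2 z Hz). lra. }
    eapply Rle_trans; [apply Cnorm_add|]. rewrite !Cnorm_mul.
    assert (X1 := B1 z Hz). assert (X2 := A2 z Hz). assert (X3 := A1 z Hz).
    assert (N1 := Cnorm_ge0 (f1 z)). assert (N2 := Cnorm_ge0 (Csub (f2 z) (G2 z))).
    assert (N3 := Cnorm_ge0 (Csub (f1 z) (G1 z))). assert (N4 := Cnorm_ge0 (G2 z)).
    assert (T : d * (M1 + M2 + 1) <= eps).
    { apply (Rmult_le_reg_r (/ (M1 + M2 + 1))). apply Rinv_0_lt_compat; lra.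
      replace (d * (M1 + M2 + 1) * / (M1 + M2 + 1)) with d by (field; lra). exact Hd2. }
    assert (Q1 : Cnorm (f1 z) * Cnorm (Csub (f2 z) (G2 z)) <= M1 * d) by (apply Rmult_le_compat; auto).
    assert (Q2 : Cnorm (Csub (f1 z) (G1 z)) * Cnorm (G2 z) <= d * (M2 + d)) by (apply Rmult_le_compat; auto).
    nra.
Qed.

Lemma Cnorm_lin_ge a c z : Cnorm z = 1 -> Cnorm c - Cnorm a <= Cnorm (Cadd (Cmul a z) c).
Proof.
  intro Hz. assert (H := Cnorm_sub_ge c (Cmul a z)). rewrite Cnorm_mul, Hz, Rmult_1_r in H.
  replace (Cadd (Cmul a z) c) with (Cadd c (Cmul a z)) by ring. exact H.
Qed.

Lemma geo_sum b N : Cmul (Csub C1 b) (Csum N (fun j => Cpow b j)) = Csub C1 (Cpow b N).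
Proof.
  induction N; simpl.
  - ring.
  - replace (Cmul (Csub C1 b) (Cadd (Csum N (fun j => Cpow b j)) (Cpow b N))) with
      (Cadd (Cmul (Csub C1 b) (Csum N (fun j => Cpow b j))) (Cmul (Csub C1 b) (Cpow b N))) by ring.
    rewrite IHN. ring.
Qed.

Lemma Cpow_C0 N : Csum (S N) (fun j => Cpow C0 j) = C1.
Proof.
  induction N.
  - simpl. ring.
  - change (Csum (S (S N)) (fun j => Cpow C0 j)) with (Cadd (Csum (S N) (fun j => Cpow C0 j)) (Cpow C0 (S N))).
    rewrite IHN. simpl. ring.
Qed.

Lemma UA_geo a c : Cnorm a < Cnorm c ->
  UA (fun z => Cinv (Cadd (Cmul a z) c)) /\ Bnd (fun z => Cinv (Cadd (Cmul a z) c)) (/ (Cnorm c - Cnorm a)).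
Proof.
  intro Hac. assert (Pa := Cnorm_ge0 a). assert (Pc : 0 < Cnorm c) by lra.
  assert (cnz : c <> C0) by (apply Cnorm_nz; auto).
  assert (Dnz : forall z, Cnorm z = 1 -> 0 < Cnorm (Cadd (Cmul a z) c)).
  { intros z Hz. assert (H := Cnorm_lin_ge a c z Hz). lra. }
  assert (Bd : Bnd (fun z => Cinv (Cadd (Cmul a z) c)) (/ (Cnorm c - Cnorm a))).
  { intros z Hz. assert (H := Cnorm_lin_ge a c z Hz). assert (H2 := Dnz z Hz).
    rewrite Cnorm_inv by (apply Cnorm_nz; auto). apply Rinv_le_contravar; lra. }
  split; auto.
  intros eps He.
  set (r := Cnorm a / Cnorm c).
  assert (Hr : Rabs r < 1).
  { rewrite Rabs_right. unfold r. apply (Rmult_lt_reg_r (Cnorm c)); auto. field_simplify; lra.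
    apply Rle_ge, Rmult_le_pos; [lra| apply Rlt_le, Rinv_0_lt_compat; lra]. }
  destruct (pow_lt_1_zero r Hr (eps * (Cnorm c - Cnorm a)) ltac:(apply Rmult_lt_0_compat; lra)) as [N HN].
  set (b := fun z => Cmul (Copp (Cdiv a c)) z).
  exists (fun z => Cmul (Cinv c) (Csum (S N) (fun j => Cpow (Cmul (Copp (Cdiv a c)) z) j))).
  repeat split.
  - apply IsPoly_scal, IsPoly_geo.
  - replace (Cmul (Copp (Cdiv a c)) C0) with C0 by ring. rewrite Cpow_C0.
    replace (Cadd (Cmul a C0) c) with c by ring. ring.
  - intros z Hz.
    assert (D := Dnz z Hz). assert (Dz : Cadd (Cmul a z) c <> C0) by (apply Cnorm_nz; auto).
    assert (G := geo_sum (Cmul (Copp (Cdiv a c)) z) (S N)).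
    set (S0 := Csum (S N) (fun j => Cpow (Cmul (Copp (Cdiv a c)) z) j)) in *.
    set (P := Cpow (Cmul (Copp (Cdiv a c)) z) (S N)) in *.
    assert (E : Csub (Cinv (Cadd (Cmul a z) c)) (Cmul (Cinv c) S0) = Cmul P (Cinv (Cadd (Cmul a z) c))).
    { replace P with (Csub C1 (Cmul (Csub C1 (Cmul (Copp (Cdiv a c)) z)) S0)) by (rewrite G; ring).
      field. split; auto. }
    rewrite E, Cnorm_mul, Cnorm_inv by auto. unfold P. rewrite Cnorm_pow, Cnorm_mul, Cnorm_opp, Hz.
    unfold Cdiv. rewrite Cnorm_mul, Cnorm_inv by auto.
    replace (Cnorm a * / Cnorm c * 1) with r by (unfold r; field; lra).
    assert (HN1 := HN (S N) ltac:(lia)).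
    assert (Pr : 0 <= r ^ S N) by (apply pow_le; unfold r; apply Rmult_le_pos; [lra|apply Rlt_le, Rinv_0_lt_compat; lra]).
    rewrite Rabs_right in HN1 by lra.
    assert (H2 := Cnorm_lin_ge a c z Hz).
    apply (Rmult_le_reg_r (Cnorm (Cadd (Cmul a z) c))); auto.
    replace (r ^ S N * / Cnorm (Cadd (Cmul a z) c) * Cnorm (Cadd (Cmul a z) c)) with (r ^ S N) by (field; lra).
    assert (eps * (Cnorm c - Cnorm a) <= eps * Cnorm (Cadd (Cmul a z) c)) by (apply Rmult_le_compat_l; lra).
    lra.
Qed.

Lemma UA_ext f g : (forall z, f z = g z) -> UA f -> UA g.
Proof.
  intros E U eps He. destruct (U eps He) as [G [HG [H0 H1]]]. exists G; repeat split; auto.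
  - rewrite <- E; auto.
  - intros z Hz; rewrite <- E; auto.
Qed.

Lemma UA_prod m (a c : nat -> Cx) : (forall i, (i < m)%nat -> Cnorm (a i) < Cnorm (c i)) ->
  exists M, 0 <= M /\ Bnd (fun z => Cprod m (fun i => Cinv (Cadd (Cmul (a i) z) (c i)))) M /\
    UA (fun z => Cprod m (fun i => Cinv (Cadd (Cmul (a i) z) (c i)))).
Proof.
  induction m; intro H; simpl.
  - exists 1; repeat split; [lra| |].
    + intros z _. unfold Cnorm, Cnorm2; simpl. replace (1*1+0*0) with 1 by ring. rewrite sqrt_1; lra.
    + intros eps He. exists (fun _ => C1); repeat split; [apply IP_const|].
      intros z _. replace (Csub C1 C1) with C0 by ring. rewrite Cnorm_C0; lra.
  - destruct IHm as [M [PM [BM UM]]]; [intros; apply H; lia|].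
    destruct (UA_geo (a m) (c m) (H m ltac:(lia))) as [U1 B1].
    assert (Pm : 0 <= / (Cnorm (c m) - Cnorm (a m))).
    { assert (H1 := H m ltac:(lia)). apply Rlt_le, Rinv_0_lt_compat; lra. }
    exists (M * / (Cnorm (c m) - Cnorm (a m))); repeat split.
    + apply Rmult_le_pos; auto.
    + intros z Hz. rewrite Cnorm_mul. apply Rmult_le_compat; auto using Cnorm_ge0.
    + apply (UA_mul _ _ M _ PM Pm BM B1 UM U1).
Qed.

Lemma CI_UA_pos h : UA h -> Ccont (fun s => Cmul (Cexpi s) (h (Cexpi s))) ->
  CI (fun s => Cmul (Cexpi s) (h (Cexpi s))) C0.
Proof.
  intros U Hc. apply CI_approx; auto.
  intros eps He. destruct (U eps He) as [G [HG [_ HA]]].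
  exists (fun s => Cmul (Cexpi s) (G (Cexpi s))). split.
  - eapply CI_ext; [|apply (IsPoly_int 1 G (or_introl eq_refl) HG 1)].
    intro s; simpl. replace (1 * 1 * s) with s by ring. replace (1 * s) with s by ring. auto.
  - intros s _. replace (Csub (Cmul (Cexpi s) (h (Cexpi s))) (Cmul (Cexpi s) (G (Cexpi s)))) with
      (Cmul (Cexpi s) (Csub (h (Cexpi s)) (G (Cexpi s)))) by ring.
    rewrite Cnorm_mul, Cnorm_expi, Rmult_1_l. apply HA, Cnorm_expi.
Qed.

Lemma CI_UA_neg h : UA h -> Ccont (fun s => h (Cexpi (-1 * s))) ->
  CI (fun s => h (Cexpi (-1 * s))) (Cmul (RtoC (2*PI)) (h C0)).
Proof.
  intros U Hc. apply CI_approx; auto.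
  intros eps He. destruct (U eps He) as [G [HG [H0 HA]]].
  exists (fun s => G (Cexpi (-1 * s))). split.
  - rewrite <- H0. eapply CI_ext; [|apply (IsPoly_int (-1) G (or_intror eq_refl) HG 0)].
    intro s; simpl. rewrite Rmult_0_r, Rmult_0_l, Cexpi_0. ring.
  - intros s _. apply HA, Cnorm_expi.
Qed.

Lemma Cinv_prod m f : Cinv (Cprod m f) = Cprod m (fun i => Cinv (f i)).
Proof.
  induction m; simpl.
  - apply Cx_ext; simpl; unfold Cnorm2; simpl; field.
  - rewrite Cinv_mul, IHm; auto.
Qed.

Lemma Ccont_lin a c : Ccont (fun s => Cadd (Cmul a (Cexpi s)) c).
Proof.
  apply Ccont_add; [apply Ccont_mul; [apply Ccont_const|] | apply Ccont_const].
  eapply Ccont_ext; [|apply (Ccont_expi 1)]. intro s; simpl; rewrite Rmult_1_l; auto.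
Qed.

Lemma Zlemma m (a c : nat -> Cx) : (forall i, (i < m)%nat -> Cnorm (a i) < Cnorm (c i)) ->
  CI (fun s => Cmul (Cinv (Cprod m (fun i => Cadd (Cmul (a i) (Cexpi s)) (c i)))) (Cmul Ci (Cexpi s))) C0.
Proof.
  intro H. destruct (UA_prod m a c H) as [M [_ [_ U]]].
  set (h := fun z => Cprod m (fun i => Cinv (Cadd (Cmul (a i) z) (c i)))) in *.
  assert (Nz : forall i s, (i < m)%nat -> Cadd (Cmul (a i) (Cexpi s)) (c i) <> C0).
  { intros i s Hi. apply Cnorm_nz. assert (H1 := Cnorm_lin_ge (a i) (c i) (Cexpi s) (Cnorm_expi s)).
    assert (H2 := H i Hi). lra. }
  assert (Hc : Ccont (fun s => Cmul (Cexpi s) (h (Cexpi s)))).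
  { apply Ccont_mul.
    - eapply Ccont_ext; [|apply (Ccont_expi 1)]. intro s; simpl; rewrite Rmult_1_l; auto.
    - unfold h. apply Ccont_prod. intros i Hi. apply Ccont_inv; [apply Ccont_lin|].
      intro s; apply Nz; auto. }
  assert (R := CI_scal Ci _ _ (CI_UA_pos h U Hc)).
  eapply CI_ext_eq; [|eapply CI_ext; [|exact R]].
  - ring.
  - intro s. unfold h. rewrite Cinv_prod. ring.
Qed.

Lemma Blemma a c : Cnorm c < Cnorm a ->
  CI (fun s => Cmul (Cinv (Cadd (Cmul a (Cexpi s)) c)) (Cmul Ci (Cexpi s)))
     (Cmul (Cmul (RtoC (2*PI)) Ci) (Cinv a)).
Proof.
  intro H. assert (Pc := Cnorm_ge0 c). assert (anz : a <> C0) by (apply Cnorm_nz; lra).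
  assert (Hq : Cnorm (Cdiv c a) < Cnorm C1).
  { unfold Cdiv. rewrite Cnorm_mul, Cnorm_inv by auto.
    replace (Cnorm C1) with 1 by (unfold Cnorm, Cnorm2; simpl; replace (1*1+0*0) with 1 by ring; rewrite sqrt_1; auto).
    apply (Rmult_lt_reg_r (Cnorm a)); [lra|]. field_simplify; lra. }
  destruct (UA_geo (Cdiv c a) C1 Hq) as [U _].
  set (h := fun z => Cinv (Cadd (Cmul (Cdiv c a) z) C1)) in *.
  assert (Nz : forall w, Cnorm w = 1 -> Cadd (Cmul (Cdiv c a) w) C1 <> C0).
  { intros w Hw. apply Cnorm_nz. assert (H1 := Cnorm_lin_ge (Cdiv c a) C1 w Hw). lra. }
  assert (Hc : Ccont (fun s => h (Cexpi (-1 * s)))).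
  { unfold h. apply Ccont_inv.
    - apply Ccont_add; [apply Ccont_mul; [apply Ccont_const|apply Ccont_expi]|apply Ccont_const].
    - intro s; apply Nz, Cnorm_expi. }
  assert (R := CI_scal (Cdiv Ci a) _ _ (CI_UA_neg h U Hc)).
  eapply CI_ext_eq; [|eapply CI_ext; [|exact R]].
  - unfold h. replace (Cadd (Cmul (Cdiv c a) C0) C1) with C1 by ring. field.
    split; [auto| intro E; assert (E1 := f_equal Re E); simpl in E1; lra].
  - intro s. unfold h.
    assert (Ee : Cexpi (-1 * s) = Cinv (Cexpi s)).
    { assert (E1 := Cexpi_add s (-1 * s)). replace (s + -1 * s) with 0 in E1 by ring.
      rewrite Cexpi_0 in E1. assert (enz : Cexpi s <> C0) by (apply Cnorm_nz; rewrite Cnorm_expi; lra).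
      replace (Cexpi (-1 * s)) with (Cmul (Cinv (Cexpi s)) (Cmul (Cexpi s) (Cexpi (-1*s)))) by (field; auto).
      rewrite E1; ring. }
    assert (enz : Cexpi s <> C0) by (apply Cnorm_nz; rewrite Cnorm_expi; lra).
    assert (N1 := Nz (Cexpi (-1 * s)) (Cnorm_expi _)).
    assert (N2 : Cadd (Cmul a (Cexpi s)) c <> C0).
    { apply Cnorm_nz. assert (H1 := Cnorm_sub_ge (Cmul a (Cexpi s)) c).
      rewrite Cnorm_mul, Cnorm_expi in H1. lra. }
    rewrite Ee in *. field. repeat split; auto.
Qed.


Definition Lf (a c : nat -> Cx) i s := Cadd (Cmul (a i) (Cexpi s)) (c i).

Lemma Res1D n (a c : nat -> Cx) : Cnorm (c O) < Cnorm (a O) ->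
  (forall i, (i < n)%nat -> Cnorm (a (S i)) < Cnorm (c (S i))) ->
  CI (fun s => Cmul (Cinv (Cmul (Lf a c O s) (Cprod n (fun i => Lf a c (S i) s)))) (Cmul Ci (Cexpi s)))
     (Cmul (Cmul (RtoC (2*PI)) Ci)
        (Cinv (Cmul (a O) (Cprod n (fun i => Cadd (Cmul (a (S i)) (Copp (Cdiv (c O) (a O)))) (c (S i))))))).
Proof.
  intros H0. assert (Pc0 := Cnorm_ge0 (c O)). assert (a0nz : a O <> C0) by (apply Cnorm_nz; lra).
  induction n; intro H.
  - eapply CI_ext_eq; [|eapply CI_ext; [|apply (Blemma (a O) (c O) H0)]].
    + simpl. replace (Cmul (a O) C1) with (a O) by ring. auto.
    + intro s; unfold Lf; simpl. replace (Cmul (Cadd (Cmul (a O) (Cexpi s)) (c O)) C1) with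
        (Cadd (Cmul (a O) (Cexpi s)) (c O)) by ring. auto.
  - assert (IH := IHn (fun i Hi => H i ltac:(lia))).
    assert (Hn := H n ltac:(lia)).
    set (an := a (S n)) in *. set (cn := c (S n)) in *.
    set (D := Csub (Cmul (a O) cn) (Cmul an (c O))).
    assert (Dnz : D <> C0).
    { apply Cnorm_nz. unfold D, Csub. eapply Rlt_le_trans; [|apply Cnorm_sub_ge].
      rewrite Cnorm_opp, !Cnorm_mul. assert (Pa := Cnorm_ge0 an). nra. }
    assert (Z := Zlemma (S n) (fun i => a (S i)) (fun i => c (S i)) H).
    assert (C := CI_sub _ _ _ _ (CI_scal (Cdiv (a O) D) _ _ IH) (CI_scal (Cdiv an D) _ _ Z)).
    eapply CI_ext_eq; [|eapply CI_ext; [|exact C]].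
    + simpl. rewrite !Cinv_mul. fold an cn.
      set (Q := Cinv (Cprod n (fun i => Cadd (Cmul (a (S i)) (Copp (Cdiv (c O) (a O)))) (c (S i))))).
      replace (Cadd (Cmul an (Copp (Cdiv (c O) (a O)))) cn) with (Cdiv D (a O)) by (unfold D; field; auto).
      field. auto.
    + intro s. simpl. unfold Lf. fold an cn.
      assert (L0nz : Cadd (Cmul (a O) (Cexpi s)) (c O) <> C0).
      { apply Cnorm_nz. assert (H1 := Cnorm_sub_ge (Cmul (a O) (Cexpi s)) (c O)).
        rewrite Cnorm_mul, Cnorm_expi in H1. lra. }
      assert (Lnnz : Cadd (Cmul an (Cexpi s)) cn <> C0).
      { apply Cnorm_nz. assert (H1 := Cnorm_lin_ge an cn (Cexpi s) (Cnorm_expi s)). lra. }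
      assert (Pnz : Cprod n (fun i => Cadd (Cmul (a (S i)) (Cexpi s)) (c (S i))) <> C0).
      { apply Cprod_nz. intros i Hi. apply Cnorm_nz.
        assert (H1 := Cnorm_lin_ge (a (S i)) (c (S i)) (Cexpi s) (Cnorm_expi s)). assert (H2 := H i ltac:(lia)). lra. }
      set (P := Cprod n (fun i => Cadd (Cmul (a (S i)) (Cexpi s)) (c (S i)))) in *.
      unfold D. unfold D in Dnz. field. repeat split; auto.
Qed.


Lemma IterInt_inner m : forall F G v,
  (forall t, CInt (fun s => F (fun j => if Nat.eqb j 0 then s else t j)) 0 (2*PI) (G (fun j => t (S j)))) ->
  IterInt m G v -> IterInt (S m) F v.
Proof.
  induction m; intros F G v HF HG.
  - simpl in HG |- *. subst v.
    exists (fun s => F (fun j => if Nat.eqb j 0 then s else 0)). split.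
    + apply (HF (fun _ => 0)).
    + intros s _. reflexivity.
  - destruct HG as [g [Hg Hs]].
    exists g; split; auto.
    intros s Hs1. specialize (Hs s Hs1).
    apply (IHm (fun t => F (fun j => if Nat.eqb j (S m) then s else t j))
                (fun t => G (fun j => if Nat.eqb j m then s else t j)) (g s)); auto.
    intro t.
    assert (H := HF (fun j => if Nat.eqb j (S m) then s else t j)).
    replace (fun s0 : R => F (fun j : nat => if Nat.eqb j (S m) then s else if Nat.eqb j 0 then s0 else t j))
      with (fun s0 : R => F (fun j : nat => if Nat.eqb j 0 then s0 else if Nat.eqb j (S m) then s else t j)).
    + exact H.
    + apply functional_extensionality; intro u. f_equal. apply functional_extensionality; intro j.
      destruct j; simpl; auto.
Qed.

Lemma IterInt_scal m : forall c G v, IterInt m G v -> IterInt m (fun t => Cmul c (G t)) (Cmul c v).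
Proof.
  induction m; intros c G v H; simpl in *.
  - subst; auto.
  - destruct H as [g [Hg Hs]]. exists (fun s => Cmul c (g s)). split.
    + apply CI_CInt, CI_scal, CInt_CI; auto.
    + intros s Hs1. apply (IHm c _ _ (Hs s Hs1)).
Qed.


Definition DD (k : nat) (A : mat) : Prop := forall i, (i < k)%nat ->
  Rsum k (fun l => if Nat.eqb l i then 0 else Cnorm (A i l)) < Cnorm (A i i).

Lemma mulv_bound k A z i : (forall l, (l < k)%nat -> Cnorm (z l) = 1) -> (i < k)%nat ->
  Cnorm (A i i) - Rsum k (fun l => if Nat.eqb l i then 0 else Cnorm (A i l)) <= Cnorm (mulv k A z i).
Proof.
  intros Hz Hi. unfold mulv. rewrite (Csum_split k _ i Hi).
  eapply Rle_trans; [|apply Cnorm_sub_ge].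
  rewrite Cnorm_mul, Hz by auto.
  assert (B := Cnorm_sum k (fun l => if Nat.eqb l i then C0 else Cmul (A i l) (z l))).
  assert (E : Rsum k (fun l => Cnorm (if Nat.eqb l i then C0 else Cmul (A i l) (z l))) =
              Rsum k (fun l => if Nat.eqb l i then 0 else Cnorm (A i l))).
  { apply Rsum_ext; intros l Hl. destruct (Nat.eqb l i); [apply Cnorm_C0|].
    rewrite Cnorm_mul, Hz; auto; ring. }
  lra.
Qed.

Lemma DD_A00 n A : DD (S n) A -> A O O <> C0.
Proof.
  intro H. apply Cnorm_nz. assert (H0 := H O ltac:(lia)).
  assert (P : 0 <= Rsum (S n) (fun l => if Nat.eqb l 0 then 0 else Cnorm (A O l))).
  { apply Rsum_ge0; intros l _; destruct (Nat.eqb l 0); [lra|apply Cnorm_ge0]. }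
  lra.
Qed.

Lemma DD_row0 n A : DD (S n) A -> Rsum n (fun l => Cnorm (A O (S l))) < Cnorm (A O O).
Proof.
  intro H. assert (H0 := H O ltac:(lia)). rewrite Rsum_shift in H0. simpl in H0. lra.
Qed.

Lemma DD_rowS n A i : DD (S n) A -> (i < n)%nat ->
  Cnorm (A (S i) O) + Rsum n (fun l => if Nat.eqb l i then 0 else Cnorm (A (S i) (S l))) < Cnorm (A (S i) (S i)).
Proof.
  intros H Hi. assert (H0 := H (S i) ltac:(lia)). rewrite Rsum_shift in H0. simpl in H0. exact H0.
Qed.

Lemma Cnorm_Cdiv a b : b <> C0 -> Cnorm (Cdiv a b) = Cnorm a / Cnorm b.
Proof. intro H; unfold Cdiv, Rdiv; rewrite Cnorm_mul, Cnorm_inv; auto. Qed.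

Lemma DD_schur n A : DD (S n) A -> DD n (schur A).
Proof.
  intros H i Hi.
  assert (a0 := DD_A00 n A H). assert (R0 := DD_row0 n A H). assert (Ri := DD_rowS n A i H Hi).
  assert (Pb := Cnorm_pos _ a0).
  set (al := Cnorm (A (S i) O)) in *. set (be := Cnorm (A O O)) in *.
  assert (Pal : 0 <= al) by apply Cnorm_ge0.
  assert (Sb : forall l, Cnorm (schur A i l) <= Cnorm (A (S i) (S l)) + al / be * Cnorm (A O (S l))).
  { intro l. unfold schur. eapply Rle_trans; [apply Cnorm_sub|].
    rewrite Cnorm_mul, Cnorm_Cdiv by auto. fold al be. unfold Rdiv. lra. }
  assert (Sd : Cnorm (A (S i) (S i)) - al / be * Cnorm (A O (S i)) <= Cnorm (schur A i i)).
  { unfold schur, Csub. eapply Rle_trans; [|apply Cnorm_sub_ge].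
    rewrite Cnorm_opp, Cnorm_mul, Cnorm_Cdiv by auto. fold al be. unfold Rdiv. lra. }
  assert (L1 : Rsum n (fun l => if Nat.eqb l i then 0 else Cnorm (schur A i l)) <=
     Rsum n (fun l => if Nat.eqb l i then 0 else Cnorm (A (S i) (S l))) +
     al / be * Rsum n (fun l => if Nat.eqb l i then 0 else Cnorm (A O (S l)))).
  { rewrite <- Rsum_scal, <- Rsum_add. apply Rsum_le; intros l _. destruct (Nat.eqb l i); [lra|apply Sb]. }
  assert (Sp := Rsum_split n (fun l => Cnorm (A O (S l))) i Hi). simpl in Sp.
  assert (Q : al / be * Rsum n (fun l => Cnorm (A O (S l))) <= al).
  { apply (Rmult_le_reg_r be); auto. replace (al / be * Rsum n (fun l => Cnorm (A O (S l))) * be) with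
      (al * Rsum n (fun l => Cnorm (A O (S l)))) by (field; lra).
    apply Rmult_le_compat_l; lra. }
  assert (E : al / be * Rsum n (fun l => Cnorm (A O (S l))) =
    al / be * Cnorm (A O (S i)) + al / be * Rsum n (fun l => if Nat.eqb l i then 0 else Cnorm (A O (S l)))).
  { rewrite Sp. ring. }
  lra.
Qed.

Definition Fk (k : nat) (A : mat) (t : nat -> R) : Cx :=
  Cmul (Cinv (Cprod k (mulv k A (fun j => Cexpi (t j))))) (Cprod k (fun j => Cmul Ci (Cexpi (t j)))).

Lemma schur_mulv n A (z : nat -> Cx) i : A O O <> C0 ->
  mulv n (schur A) (fun j => z (S j)) i =
  Cadd (Cmul (A (S i) O) (Copp (Cdiv (Csum n (fun l => Cmul (A O (S l)) (z (S l)))) (A O O))))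
       (Csum n (fun l => Cmul (A (S i) (S l)) (z (S l)))).
Proof.
  intro H. unfold mulv, schur.
  rewrite (Csum_ext n _ (fun l => Cadd (Cmul (A (S i) (S l)) (z (S l)))
        (Cmul (Copp (Cdiv (A (S i) O) (A O O))) (Cmul (A O (S l)) (z (S l)))))).
  - rewrite Csum_add, Csum_scal. field; auto.
  - intros l _. field; auto.
Qed.

Lemma step_int n A t : DD (S n) A ->
  CInt (fun s => Fk (S n) A (fun j => if Nat.eqb j 0 then s else t j)) 0 (2*PI)
    (Cmul (Cmul (Cmul (RtoC (2*PI)) Ci) (Cinv (A O O))) (Fk n (schur A) (fun j => t (S j)))).
Proof.
  intro HD. apply CI_CInt.
  assert (a0 := DD_A00 n A HD).
  set (a := fun i => A i O).
  set (c := fun i => Csum n (fun l => Cmul (A i (S l)) (Cexpi (t (S l))))).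
  assert (H0 : Cnorm (c O) < Cnorm (a O)).
  { unfold a, c. eapply Rle_lt_trans; [apply Cnorm_sum|].
    eapply Rle_lt_trans; [|apply (DD_row0 n A HD)]. right. apply Rsum_ext; intros l _.
    rewrite Cnorm_mul, Cnorm_expi; ring. }
  assert (Hs : forall i, (i < n)%nat -> Cnorm (a (S i)) < Cnorm (c (S i))).
  { intros i Hi. unfold a, c. assert (R := DD_rowS n A i HD Hi).
    assert (B := mulv_bound n (fun i l => A (S i) (S l)) (fun l => Cexpi (t (S l))) i
                   (fun l _ => Cnorm_expi _) Hi).
    unfold mulv in B. lra. }
  set (P := Cprod n (fun j => Cmul Ci (Cexpi (t (S j))))).
  assert (R := CI_scal P _ _ (Res1D n a c H0 Hs)).
  eapply CI_ext_eq; [|eapply CI_ext; [|exact R]].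
  - unfold Fk. unfold P.
    rewrite (Cprod_ext n (mulv n (schur A) (fun j => Cexpi (t (S j))))
                         (fun i => Cadd (Cmul (a (S i)) (Copp (Cdiv (c O) (a O)))) (c (S i)))).
    + rewrite !Cinv_mul. unfold a. ring.
    + intros i _. rewrite (schur_mulv n A (fun j => Cexpi (t j)) i a0). unfold a, c. reflexivity.
  - intro s. unfold Fk. rewrite !Cprod_shift. simpl.
    rewrite (Cprod_ext n (fun i => mulv (S n) A (fun j => Cexpi (if Nat.eqb j 0 then s else t j)) (S i))
                         (fun i => Lf a c (S i) s)).
    + replace (mulv (S n) A (fun j => Cexpi (if Nat.eqb j 0 then s else t j)) O) with (Lf a c O s).
      * unfold P. ring.
      * unfold mulv, Lf, a, c. rewrite Csum_shift. simpl. reflexivity.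
    + intros i _. unfold mulv, Lf, a, c. rewrite Csum_shift. simpl. reflexivity.
Qed.

Lemma main k : forall A, DD k A -> det k A <> C0 /\
  IterInt k (Fk k A) (Cmul (Cpow (Cmul (RtoC (2*PI)) Ci) k) (Cinv (det k A))).
Proof.
  induction k; intros A HD.
  - split.
    + simpl. intro E; assert (E1 := f_equal Re E); simpl in E1; lra.
    + simpl. unfold Fk. simpl. field. intro E; assert (E1 := f_equal Re E); simpl in E1; lra.
  - assert (a0 := DD_A00 k A HD).
    destruct (IHk (schur A) (DD_schur k A HD)) as [dnz HI].
    rewrite (DetM.det_schur k A a0).
    split; [apply Cmul_nz; auto|].
    apply (IterInt_inner k _ (fun t => Cmul (Cmul (Cmul (RtoC (2*PI)) Ci) (Cinv (A O O))) (Fk k (schur A) t))).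
    + intro t. apply step_int; auto.
    + assert (HS := IterInt_scal k (Cmul (Cmul (RtoC (2*PI)) Ci) (Cinv (A O O))) _ _ HI).
      replace (Cmul (Cpow (Cmul (RtoC (2 * PI)) Ci) (S k)) (Cinv (Cmul (A O O) (det k (schur A))))) with
        (Cmul (Cmul (Cmul (RtoC (2*PI)) Ci) (Cinv (A O O)))
           (Cmul (Cpow (Cmul (RtoC (2 * PI)) Ci) k) (Cinv (det k (schur A))))); auto.
      rewrite Cinv_mul. simpl. ring.
Qed.


Lemma Rsum_CS n f : Rsum n f * Rsum n f <= INR n * Rsum n (fun l => f l * f l).
Proof.
  induction n; [simpl; lra|].
  change (Rsum (S n) f) with (Rsum n f + f n).
  change (Rsum (S n) (fun l => f l * f l)) with (Rsum n (fun l => f l * f l) + f n * f n).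
  rewrite S_INR.
  set (S0 := Rsum n f) in *. set (Q := Rsum n (fun l => f l * f l)) in *.
  destruct (Nat.eq_dec n 0) as [->|Hn].
  - unfold S0, Q; simpl. nra.
  - assert (Pn : 0 < INR n) by (apply lt_0_INR; lia).
    assert (K : 2 * S0 * f n <= Q + INR n * (f n * f n)).
    { apply (Rmult_le_reg_l (INR n)); auto.
      assert (Sq := Rle_0_sqr (S0 - INR n * f n)). unfold Rsqr in Sq. nra. }
    nra.
Qed.

Lemma frob_DD k A : (1 <= k)%nat -> frob k (sub_id A) < 1 / INR k -> DD k A.
Proof.
  intros Hk Hf i Hi.
  set (b := fun l => Cnorm (sub_id A i l)).
  assert (Pk : 0 < INR k) by (apply lt_0_INR; lia).
  assert (Pb : forall l, 0 <= b l) by (intro; apply Cnorm_ge0).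
  assert (Tot := Rsum_ge0 k (fun i => Rsum k (fun j => Cnorm2 (sub_id A i j)))
     (fun i _ => Rsum_ge0 k _ (fun j _ => Cnorm2_ge0 _))).
  assert (F2 : frob k (sub_id A) * frob k (sub_id A) = Rsum k (fun i => Rsum k (fun j => Cnorm2 (sub_id A i j)))).
  { unfold frob. apply sqrt_sqrt; auto. }
  assert (Pf : 0 <= frob k (sub_id A)) by apply sqrt_pos.
  assert (Row : Rsum k (fun l => b l * b l) <= frob k (sub_id A) * frob k (sub_id A)).
  { rewrite F2. rewrite (Rsum_split k (fun i0 => Rsum k (fun j => Cnorm2 (sub_id A i0 j))) i Hi).
    assert (0 <= Rsum k (fun l => if Nat.eqb l i then 0 else Rsum k (fun j => Cnorm2 (sub_id A l j)))).
    { apply Rsum_ge0; intros l _; destruct (Nat.eqb l i); [lra|]. apply Rsum_ge0; intros; apply Cnorm2_ge0. }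
    assert (Rsum k (fun l => b l * b l) = Rsum k (fun j => Cnorm2 (sub_id A i j))).
    { apply Rsum_ext; intros; unfold b; apply Cnorm_sq. }
    lra. }
  assert (Sb : Rsum k b < 1).
  { assert (CS := Rsum_CS k b).
    assert (Pr : 0 <= Rsum k b) by (apply Rsum_ge0; auto).
    assert (F3 : frob k (sub_id A) * frob k (sub_id A) < 1 / INR k * (1 / INR k)).
    { apply Rmult_le_0_lt_compat; auto. }
    assert (X : INR k * (1 / INR k * (1 / INR k)) <= 1).
    { replace (INR k * (1 / INR k * (1 / INR k))) with (1 / INR k) by (field; lra).
      assert (1 <= INR k) by (apply (le_INR 1); auto). unfold Rdiv. rewrite Rmult_1_l.
      rewrite <- Rinv_1. apply Rinv_le_contravar; lra. }
    assert (Y : Rsum k b * Rsum k b < 1).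
    { eapply Rle_lt_trans; [exact CS|].
      assert (INR k * Rsum k (fun l => b l * b l) <= INR k * (frob k (sub_id A) * frob k (sub_id A))).
      { apply Rmult_le_compat_l; lra. }
      assert (INR k * (frob k (sub_id A) * frob k (sub_id A)) < INR k * (1 / INR k * (1 / INR k))).
      { apply Rmult_lt_compat_l; auto. }
      lra. }
    nra. }
  rewrite (Rsum_split k b i Hi) in Sb.
  assert (E : Rsum k (fun l => if Nat.eqb l i then 0 else Cnorm (A i l)) =
              Rsum k (fun l => if Nat.eqb l i then 0 else b l)).
  { apply Rsum_ext; intros l _. destruct (Nat.eqb_spec l i); auto.
    unfold b, sub_id, delta. destruct (Nat.eqb_spec i l); [lia|]. f_equal. apply Cx_ext; simpl; ring. }
  assert (Aii : A i i = Cadd C1 (sub_id A i i)).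
  { unfold sub_id, delta. rewrite Nat.eqb_refl. apply Cx_ext; simpl; ring. }
  assert (G := Cnorm_sub_ge C1 (sub_id A i i)).
  replace (Cnorm C1) with 1 in G by (unfold Cnorm, Cnorm2; simpl; replace (1*1+0*0) with 1 by ring; rewrite sqrt_1; auto).
  rewrite E, Aii. fold (b i) in G. lra.
Qed.

Theorem theorem2 (k : nat) (A : mat) :
  (1 <= k)%nat ->
  frob k (sub_id A) < 1 / INR k ->
  (forall z : nat -> Cx, (forall j, (j < k)%nat -> Cnorm (z j) = 1) ->
     Cprod k (mulv k A z) <> C0) /\
  det k A <> C0 /\
  exists v : Cx,
    TorusInt k (fun z => Cinv (Cprod k (mulv k A z))) v /\
    Cinv (det k A) = Cmul (Cinv (Cpow (Cmul (RtoC (2 * PI)) Ci) k)) v.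
Proof.
  intros Hk Hf. assert (HD := frob_DD k A Hk Hf).
  destruct (main k A HD) as [dnz HI].
  split; [|split; auto].
  - intros z Hz. apply Cprod_nz. intros i Hi. apply Cnorm_nz.
    assert (B := mulv_bound k A z i Hz Hi). assert (H := HD i Hi). lra.
  - exists (Cmul (Cpow (Cmul (RtoC (2 * PI)) Ci) k) (Cinv (det k A))). split.
    + exact HI.
    + assert (nz : Cpow (Cmul (RtoC (2 * PI)) Ci) k <> C0).
      { apply Cpow_nz. intro E; assert (E1 := f_equal Im E); simpl in E1. assert (P := PI_RGT_0). lra. }
      field. auto.
Qed.
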